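(* Let $m\in\{1,2,3\}$ and let $S\ni h$ be a polarized lattice that is $(m-1)$-admissible (no condition if $m=1$), with $h^2\ge4$ if $m=2$ and $h^2=8$ if $m=3$. Let $\Delta$ be a Weyl chamber for $\operatorname{rt}(S,h)$ and $\bar P$ the closed fundamental polyhedron extending $\Delta$. If $S\ni h$ fails to be $m$-admissible, then there exists an $m$-isotropic vector $w\in\bar P$.
   Context: All lattices are even; $(S,h)$ polarized means $S$ hyperbolic, $h^2>0$. $\operatorname{rt}(S,h)$ is the root lattice spanned by $\{r\in S: r^2=-2,\ r\cdot h=0\}$, and a Weyl chamber $\Delta$ for it is given by its set of positive roots $P_\Delta$. The closed fundamental polyhedron is $\bar P=\{v\in S\otimes\mathbb{R}: v^2\ge0,\ v\cdot h\ge0,\ v\cdot r\ge0 \text{ for all } r\in P_\Delta \text{ and all roots } r \text{ with } r\cdot h>0\}$. A vector $w$ is $m$-isotropic if $w^2=0$ and $w\cdot h=m$. $S\ni h$ is $1$-admissible if it has no $1$-isotropic vector; $2$-admissible (defined for $h^2\ge4$) if moreover it has no $2$-isotropic vector; $3$-admissible (defined for $h^2=8$) if moreover it has no $3$-isotropic vector. *)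

(* Defs.v *)
From HB Require Import structures.
From mathcomp Require Import all_boot all_order all_algebra.
Set Implicit Arguments. Unset Strict Implicit. Unset Printing Implicit Defensive.
Import Order.TTheory GRing.Theory Num.Theory.
Local Open Scope ring_scope.

(* An (integral) lattice S of rank n is Z^n (column vectors) with the
   bilinear form given by a Gram matrix G : 'M[int]_n. *)

Definition bform {n} (G : 'M[int]_n) (u v : 'cV[int]_n) : int :=
  (u^T *m G *m v) 0 0.

Definition bformQ {n} (G : 'M[int]_n) (u v : 'cV[rat]_n) : rat :=
  (u^T *m map_mx intr G *m v) 0 0.

Definition intQ {n} (v : 'cV[int]_n) : 'cV[rat]_n := map_mx intr v.

Definition even_lattice {n} (G : 'M[int]_n) : Prop :=
  G^T = G /\ forall i, (2 %| G i i)%Z.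

Definition hyperbolic {n} (G : 'M[int]_n) : Prop :=
  exists P : 'M[rat]_n, P \in unitmx /\
    exists d : 'I_n -> rat,
      P^T *m map_mx intr G *m P = \matrix_(i, j) (if i == j then d i else 0)
      /\ exists i0, 0 < d i0 /\ forall i, i != i0 -> d i < 0.

Definition polarized {n} (G : 'M[int]_n) (h : 'cV[int]_n) : Prop :=
  even_lattice G /\ hyperbolic G /\ 0 < bform G h h.

Definition is_root {n} (G : 'M[int]_n) (r : 'cV[int]_n) : bool :=
  bform G r r == -2.

(* roots of rt(S,h): roots orthogonal to h (these are exactly the roots of
   the root lattice rt(S,h)) *)
Definition is_rt_root {n} (G : 'M[int]_n) (h r : 'cV[int]_n) : bool :=
  is_root G r && (bform G r h == 0).

(* A Weyl chamber Delta of rt(S,h) is determined by a regular element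
   x of rt(S,h) (x) Q, realized as the linear functional r |-> x.r with
   x in S (x) Q, nonvanishing on all roots; its positive roots are
   P_Delta = {r root of rt(S,h) : x.r > 0}. *)
Definition regular_elt {n} (G : 'M[int]_n) (h : 'cV[int]_n) (x : 'cV[rat]_n) : Prop :=
  forall r, is_rt_root G h r -> bformQ G x (intQ r) != 0.

Definition positive_root {n} (G : 'M[int]_n) (h : 'cV[int]_n) (x : 'cV[rat]_n)
  (r : 'cV[int]_n) : bool :=
  is_rt_root G h r && (0 < bformQ G x (intQ r)).

Definition in_Pbar {n} (G : 'M[int]_n) (h : 'cV[int]_n) (x : 'cV[rat]_n)
  (v : 'cV[int]_n) : Prop :=
  0 <= bform G v v /\ 0 <= bform G v h /\
  (forall r, positive_root G h x r -> 0 <= bform G v r) /\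
  (forall r, is_root G r -> 0 < bform G r h -> 0 <= bform G v r).

Definition isotropic_m {n} (G : 'M[int]_n) (h : 'cV[int]_n) (m : nat)
  (w : 'cV[int]_n) : Prop :=
  bform G w w = 0 /\ bform G w h = m%:Z.

(* k-admissibility (the conditions on h^2 under which it is defined are
   stated separately): no j-isotropic vector for 1 <= j <= k. *)
Definition admissible {n} (G : 'M[int]_n) (h : 'cV[int]_n) (k : nat) : Prop :=
  forall j : nat, (0 < j <= k)%N -> ~ exists w, isotropic_m G h j w.

(* Main.v *)
Require Import Defs.
From HB Require Import structures.
From mathcomp Require Import all_boot all_order all_algebra.
Import Order.TTheory GRing.Theory Num.Theory.
Set Implicit Arguments. Unset Strict Implicit.
Local Open Scope ring_scope.

Section Bil.
Variable R : comRingType.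
Variable n : nat.
Definition bil (M : 'M[R]_n) (u v : 'cV[R]_n) : R := (u^T *m M *m v) 0 0.
Lemma bilDl M u v w : bil M (u + v) w = bil M u w + bil M v w.
Proof. by rewrite /bil linearD /= !mulmxDl mxE. Qed.
Lemma bilDr M u v w : bil M w (u + v) = bil M w u + bil M w v.
Proof. by rewrite /bil mulmxDr mxE. Qed.
Lemma bilZl M a u w : bil M (a *: u) w = a * bil M u w.
Proof. by rewrite /bil linearZ /= -!scalemxAl mxE. Qed.
Lemma bilZr M a u w : bil M w (a *: u) = a * bil M w u.
Proof. by rewrite /bil -scalemxAr mxE. Qed.
Lemma bilNl M u w : bil M (- u) w = - bil M u w.
Proof. by rewrite -scaleN1r bilZl mulN1r. Qed.
Lemma bilNr M u w : bil M w (- u) = - bil M w u.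
Proof. by rewrite -scaleN1r bilZr mulN1r. Qed.
Lemma bilBl M u v w : bil M (u - v) w = bil M u w - bil M v w.
Proof. by rewrite bilDl bilNl. Qed.
Lemma bilBr M u v w : bil M w (u - v) = bil M w u - bil M w v.
Proof. by rewrite bilDr bilNr. Qed.
Lemma bil_sym M u v : M^T = M -> bil M u v = bil M v u.
Proof.
move=> sM; rewrite /bil -[in LHS](trmxK (u^T *m M *m v)) mxE.
by rewrite !trmx_mul trmxK sM mulmxA.
Qed.
End Bil.

From mathcomp Require Import ring lra zify.

Lemma signS n (M : 'M[rat]_n) P (d : 'I_n -> rat) i0 :
  P \in unitmx -> P^T *m M *m P = \matrix_(i, j) (if i == j then d i else 0) ->
  (forall i, i != i0 -> d i < 0) ->
  forall u, (invmx P *m u) i0 0 = 0 -> bil M u u <= 0.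
Proof.
move=> Pu PMP dneg u.
have key : forall y : 'cV_n, y i0 0 = 0 ->
   (y^T *m (\matrix_(i, j) (if i == j then d i else 0)) *m y) 0 0 <= 0.
  move=> y y0.
  rewrite mxE -oppr_ge0 -sumrN; apply: sumr_ge0 => j _.
  rewrite mxE (bigD1 j) //= big1 => [|i /negbTE ij]; last by rewrite !mxE ij mulr0.
  rewrite !mxE eqxx addr0.
  have [->|jn] := eqVneq j i0; first by rewrite y0 !mulr0 oppr0.
  have := dneg j jn => dj.
  nra.
move=> y0.
have -> : u = P *m (invmx P *m u) by rewrite mulKVmx.
rewrite /bil trmx_mul.
have -> : ((invmx P *m u)^T *m P^T *m M *m (P *m (invmx P *m u))) =
   (invmx P *m u)^T *m (P^T *m M *m P) *m (invmx P *m u) by rewrite !mulmxA.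
by rewrite PMP; apply: key.
Qed.

Lemma entry_lin n (A B : 'cV[rat]_n) (a b : rat) i :
  (a *: A - b *: B) i 0 = a * A i 0 - b * B i 0.
Proof. by rewrite !mxE. Qed.

Lemma FQ n (M : 'M[rat]_n) P (d : 'I_n -> rat) i0 (hq : 'cV_n) :
  M^T = M ->
  P \in unitmx -> P^T *m M *m P = \matrix_(i, j) (if i == j then d i else 0) ->
  (forall i, i != i0 -> d i < 0) ->
  0 < bil M hq hq ->
  forall v, bil M hq hq * bil M v v <= bil M v hq ^+ 2.
Proof.
move=> sM Pu PMP dneg kpos v.
have S := signS Pu PMP dneg.
pose k := bil M hq hq. pose B := bil M v hq.
pose z := k *: v - B *: hq.
have zh : bil M z hq = 0 by rewrite /z bilBl !bilZl mulrC subrr.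
have Qz : bil M z z = k * (k * bil M v v - B ^+ 2).
  rewrite /z !(bilBl, bilBr, bilZl, bilZr) (bil_sym hq v sM) -/B -/k; ring.
clearbody z.
have zle : bil M z z <= 0.
  rewrite leNgt; apply/negP => zpos.
  pose a := (invmx P *m hq) i0 0. pose b := (invmx P *m z) i0 0.
  have : bil M (a *: z - b *: hq) (a *: z - b *: hq) <= 0.
    apply: S.
    rewrite mulmxBr -!scalemxAr.
    by rewrite entry_lin /a /b mulrC subrr.
  rewrite !(bilBl, bilBr, bilZl, bilZr) (bil_sym hq z sM) zh.
  have [a0|an0] := eqVneq a 0.
    have := S hq a0. rewrite -/k. move=> kle. exfalso. 
    by move: kpos; rewrite -/k ltNge kle.
  have a2 : 0 < a ^+ 2 by rewrite lt_def sqrf_eq0 an0 sqr_ge0. 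
  move=> H. 
  have : 0 < a * (a * bil M z z) by rewrite mulrA -expr2 mulr_gt0.
  nra.
by move: zle; rewrite Qz pmulr_rle0 // subr_le0.
Qed.

Lemma bformE n (G : 'M[int]_n) u v : bform G u v = bil G u v.
Proof. by []. Qed.

Lemma bformQ_intQ n (G : 'M[int]_n) u v :
  bformQ G (intQ u) (intQ v) = (bform G u v)%:~R.
Proof.
rewrite /bformQ /intQ /bform map_trmx -!map_mxM mxE //.
Qed.

Lemma FZ n (G : 'M[int]_n) h : polarized G h ->
  forall v, bform G h h * bform G v v <= bform G v h ^+ 2.
Proof.
move=> [[sG _] [[P [Pu [d [PMP [i0 [_ dneg]]]]]] hpos]] v.
have sM : (map_mx intr G : 'M[rat]_n)^T = map_mx intr G by rewrite map_trmx sG.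
have kpos : 0 < bil (map_mx intr G) (intQ h) (intQ h).
  by change (0 < bformQ G (intQ h) (intQ h)); rewrite bformQ_intQ ltr0z.
have H : bformQ G (intQ h) (intQ h) * bformQ G (intQ v) (intQ v) <= bformQ G (intQ v) (intQ h) ^+ 2
  := FQ sM Pu PMP dneg kpos (intQ v).
by move: H; rewrite !bformQ_intQ -rmorphM -rmorphXn ler_int.
Qed.

Lemma N1 n (G : 'M[int]_n) h u v : polarized G h ->
  bform G u u = 0 -> bform G v v = 0 -> 0 < bform G u h -> 0 < bform G u v ->
  0 < bform G v h.
Proof.
move=> pol uu vv ah c.
have F := FZ pol.
have sG : G^T = G by case: pol => [[]].
have kp : 0 < bform G h h by case: pol => _ [].
rewrite !bformE in uu vv ah c kp F *.
set a := bil G u h in ah *; set b := bil G v h; set k := bil G h h in kp F *.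
set cc := bil G u v in c.
rewrite ltNge; apply/negP => b0.
have [bz|bn] := eqVneq b 0.
  have := F (u + (a ^+ 2) *: v).
  rewrite !bformE !(bilDl, bilDr, bilZl, bilZr) uu vv (bil_sym v u sG) -/a -/b -/cc bz.
  rewrite !mulr0 !addr0 add0r.
  have a2 : 0 < a ^+ 2 by rewrite exprn_gt0.
  have t1 : a ^+ 2 <= a ^+ 2 * cc by rewrite ler_peMr // ?ltW.
  have k1 : 1 <= k by [].
  move: (a ^+ 2) (a ^+ 2 * cc) a2 t1 => x y x0 xy.
  clearbody k. nia.
have bneg : b < 0 by rewrite lt_neqAle bn b0.
have := F ((- b) *: u + a *: v).
rewrite !bformE !(bilDl, bilDr, bilZl, bilZr) uu vv (bil_sym v u sG) -/a -/b -/cc.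
have e : - b * a + a * b = 0 by ring.
rewrite e !mulr0 !addr0 add0r expr0n /=.
have p : 0 < a * (- b * cc) by rewrite mulr_gt0 // mulr_gt0 // oppr_gt0.
have : 0 < k * (a * (- b * cc) + a * (- b * cc)) by rewrite mulr_gt0 // addr_gt0.
by move=> q r; move: (lt_le_trans q r); rewrite ltxx.
Qed.

Lemma bform_symI n (G : 'M[int]_n) u v : G^T = G -> bform G u v = bform G v u.
Proof. by move=> sG; rewrite !bformE; apply: bil_sym. Qed.

Lemma FQ' n (G : 'M[int]_n) h : polarized G h ->
  forall v, (bform G h h)%:~R * bformQ G v v <= bformQ G v (intQ h) ^+ 2.
Proof.
move=> [[sG _] [[P [Pu [d [PMP [i0 [_ dneg]]]]]] hpos]] v.
have sM : (map_mx intr G : 'M[rat]_n)^T = map_mx intr G by rewrite map_trmx sG.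
have kpos : 0 < bil (map_mx intr G) (intQ h) (intQ h).
  by change (0 < bformQ G (intQ h) (intQ h)); rewrite bformQ_intQ ltr0z.
rewrite -bformQ_intQ.
exact: (FQ sM Pu PMP dneg kpos v).
Qed.

Lemma bformQE n (G : 'M[int]_n) u v : bformQ G u v = bil (map_mx intr G) u v.
Proof. by []. Qed.

Lemma bformQ_sym n (G : 'M[int]_n) u v : G^T = G -> bformQ G u v = bformQ G v u.
Proof.
move=> sG; apply: bil_sym; by rewrite map_trmx sG.
Qed.

Lemma intQ_lin n (u v : 'cV[int]_n) (a : int) :
  intQ (u + a *: v) = intQ u + a%:~R *: intQ v.
Proof. by apply/matrixP => i j; rewrite !mxE rmorphD rmorphM. Qed.

Lemma lowb n (G : 'M[int]_n) h (m : nat) (x : 'cV[rat]_n) : polarized G h ->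
  exists c : rat, forall w, isotropic_m G h m w -> c <= bformQ G x (intQ w).
Proof.
move=> pol.
have sG : G^T = G by case: pol => [[]].
have kp : 0 < bform G h h by case: pol => _ [].
set k : rat := (bform G h h)%:~R.
have kq : 0 < k by rewrite ltr0z.
exists ((k * bformQ G x x - (m%:R - bformQ G x (intQ h)) ^+ 2) / (2 * k)).
move=> w [ww wh].
have H := FQ' pol (intQ w - x).
rewrite !bformQE !(bilBl, bilBr) -!bformQE in H.
rewrite (bformQ_sym (intQ w) x sG) !bformQ_intQ ww wh -/k in H.
rewrite ler_pdivrMr; last by rewrite mulr_gt0.
nra.
Qed.

Lemma scale_int n (x : 'cV[rat]_n) :
  exists D : int, 0 < D /\ exists X : 'cV[int]_n, intQ X = D%:~R *: x.
Proof.
exists (\prod_i denq (x i 0)); split.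
  by apply: prodr_gt0 => i _; exact: denq_gt0.
exists (\col_i (numq (x i 0) * \prod_(j | j != i) denq (x j 0))).
apply/matrixP => i j; rewrite !mxE (ord1 j).
rewrite intrM [in RHS](bigD1 i) //= intrM numqE; ring.
Qed.

From Stdlib Require Import Classical.

Lemma step n (G : 'M[int]_n) h (m : nat) (x : 'cV[rat]_n) w :
  (0 < m)%N -> polarized G h -> admissible G h m.-1 -> isotropic_m G h m w ->
  in_Pbar G h x w \/
  exists w', isotropic_m G h m w' /\ bformQ G x (intQ w') < bformQ G x (intQ w).
Proof.
move=> m0 pol adm [ww wh].
have sG : G^T = G by case: pol => [[]].
case: (classic (exists r, positive_root G h x r /\ bform G w r < 0)) =>
  [[r [pr neg]] | nopr].
  right.
  move: pr; rewrite /positive_root /is_rt_root /is_root => /andP [/andP [/eqP rr /eqP rh] xr].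
  set a := bform G w r in neg.
  exists (w + a *: r); split; first split.
  - rewrite !bformE !(bilDl, bilDr, bilZl, bilZr) -!bformE ww rr (bform_symI r w sG) -/a.
    ring.
  - rewrite !bformE !(bilDl, bilDr, bilZl, bilZr) -!bformE wh.
    have -> : bform G r h = 0 by exact: rh.
    by rewrite mulr0 addr0.
  - rewrite intQ_lin bformQE bilDr bilZr -bformQE.
    rewrite gtrDl pmulr_llt0; first by rewrite ltrz0.
    exact: xr.
case: (classic (exists r, is_root G r /\ 0 < bform G r h /\ bform G w r < 0)) =>
  [[r [/eqP rr [rh neg]]] | noroot].
  exfalso.
  set a := bform G w r in neg.
  set w2 := w + a *: r.
  have w2w2 : bform G w2 w2 = 0.
    rewrite /w2 !bformE !(bilDl, bilDr, bilZl, bilZr) -!bformE ww rr (bform_symI r w sG) -/a.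
    ring.
  have w2h : bform G w2 h = m%:Z + a * bform G r h.
    by rewrite /w2 !bformE !(bilDl, bilDr, bilZl, bilZr) -!bformE wh.
  have ww2 : bform G w w2 = a * a.
    by rewrite /w2 !bformE !(bilDl, bilDr, bilZl, bilZr) -!bformE ww -/a add0r.
  have pos : 0 < bform G w2 h.
    apply: (N1 pol ww w2w2); first by rewrite wh ltz_nat.
    by rewrite ww2 -expr2 lt_def sqrf_eq0 sqr_ge0 andbT; exact: ltr0_neq0 neg.
  have ltm : bform G w2 h < m%:Z.
    by rewrite w2h gtrDl nmulr_rlt0.
  apply: (adm `|bform G w2 h|%N).
    apply/andP; split; first by rewrite absz_gt0; apply/eqP => e; rewrite e in pos.
    by move: pos ltm; case: (bform G w2 h) => // k _; rewrite ltz_nat; case: (m).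
  exists w2; split => //.
  by rewrite gez0_abs // ltW.
left; split; first by rewrite ww.
split; first by rewrite wh.
split.
  move=> r pr; rewrite leNgt; apply/negP => neg; apply: nopr; by exists r.
move=> r rr rh; rewrite leNgt; apply/negP => neg; apply: noroot; by exists r.
Qed.

Theorem mainTheorem11 (n : nat) (G : 'M[int]_n) (h : 'cV[int]_n) (m : nat)
  (x : 'cV[rat]_n) :
  (1 <= m <= 3)%N ->
  polarized G h ->
  admissible G h m.-1 ->
  (m = 2%N -> 4 <= bform G h h) ->
  (m = 3%N -> bform G h h = 8) ->
  regular_elt G h x ->
  ~ admissible G h m ->
  exists w, isotropic_m G h m w /\ in_Pbar G h x w.
Proof.
move=> /andP [m1 _] pol adm _ _ _ nadm.
have [w0 iso0] : exists w, isotropic_m G h m w.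
  case: (classic (exists j, (0 < j <= m)%N /\ exists w, isotropic_m G h j w)) =>
    [[j [/andP [j0 jm] ex]] | none]; last first.
    by exfalso; apply: nadm => j jr ex; apply: none; exists j.
  case: (ltnP j m) => [jlt | jge].
    exfalso; apply: (adm j) => //.
    by rewrite j0 /=; case: (m) jlt => // k; rewrite ltnS.
  by have -> : m = j by apply/eqP; rewrite eqn_leq jm jge.
have [c cb] := lowb m x pol.
have [D [D0 [X XE]]] := scale_int x.
have fE w : ((bform G X w)%:~R : rat) = D%:~R * bformQ G x (intQ w).
  by rewrite -bformQ_intQ XE bformQE bilZl.
pose c0 : int := Num.floor (D%:~R * c).
have lb w : isotropic_m G h m w -> c0 <= bform G X w.
  move=> iw; rewrite -(ler_int rat); apply: le_trans (floor_le _) _.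
  by rewrite fE ler_pM2l ?ltr0z // cb.
suff main : forall N : nat, forall w, isotropic_m G h m w ->
    bform G X w <= c0 + N%:Z ->
    exists w, isotropic_m G h m w /\ in_Pbar G h x w.
  apply: (main `|bform G X w0 - c0|%N w0 iso0).
  have := lb w0 iso0; lia.
elim => [|N IH] w iw bw.
  case: (step x m1 pol adm iw) => [P|[w' [iw' lt']]]; first by exists w.
  have := lb w' iw'.
  have : bform G X w' < bform G X w.
    by rewrite -(ltr_int rat) !fE ltr_pM2l // ltr0z.
  lia.
case: (step x m1 pol adm iw) => [P|[w' [iw' lt']]]; first by exists w.
apply: (IH w' iw').
have : bform G X w' < bform G X w.
  by rewrite -(ltr_int rat) !fE ltr_pM2l // ltr0z.
lia.
Qed.
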